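(* Assume that $\{A_0,A_1\}$ is a partition of $\mathbb R$ which is a $2$-S-covering. Then at least one of the sets $A_0,A_1$ is a $2$-covering.
   Context: A family $\mathcal A$ of pairwise disjoint subsets of $\mathbb R$ is a $\kappa$-S-covering if $|\mathcal A|=\kappa$ and for every $F\subseteq\mathbb R$ with $|F|=\kappa$ there is $t\in\mathbb R$ such that $F+t\subseteq\bigcup\mathcal A$ and $|(F+t)\cap A|=1$ for every $A\in\mathcal A$. A set $A\subseteq\mathbb R$ is a $2$-covering if for every $B\subseteq\mathbb R$ with $|B|=2$ there is $x\in\mathbb R$ with $B+x\subseteq A$. *)

(* Defs.v *)
From Stdlib Require Import Reals.
Open Scope R_scope.

(* A two-element subset of R is written {a, b} with a <> b. *)

Definition exactly_one_in (A : R -> Prop) (a b : R) : Prop :=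
  (A a /\ ~ A b) \/ (~ A a /\ A b).

Definition partition2 (A0 A1 : R -> Prop) : Prop :=
  (forall x, ~ (A0 x /\ A1 x)) /\ (forall x, A0 x \/ A1 x) /\
  (exists x, A0 x) /\ (exists x, A1 x).

Definition two_S_covering (A0 A1 : R -> Prop) : Prop :=
  forall a b : R, a <> b ->
    exists t : R,
      ((A0 (a + t) \/ A1 (a + t)) /\ (A0 (b + t) \/ A1 (b + t))) /\
      exactly_one_in A0 (a + t) (b + t) /\
      exactly_one_in A1 (a + t) (b + t).

Definition two_covering (A : R -> Prop) : Prop :=
  forall a b : R, a <> b -> exists x : R, A (a + x) /\ A (b + x).

(* Main.v *)
Require Import Defs.
From Stdlib Require Import Reals Lra Classical.
Open Scope R_scope.

Lemma nocov (A B : R -> Prop) : (forall x, A x \/ B x) -> ~ two_covering A ->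
  exists d, d <> 0 /\ forall y, A y -> B (y + d) /\ B (y - d).
Proof.
  intros Hp Hn. unfold two_covering in Hn.
  apply not_all_ex_not in Hn. destruct Hn as [a Hn].
  apply not_all_ex_not in Hn. destruct Hn as [b Hn].
  apply imply_to_and in Hn. destruct Hn as [Hab Hn].
  exists (b - a). split. { intro; apply Hab; lra. }
  intros y Hy. split.
  - destruct (Hp (y + (b - a))) as [H|H]; [|exact H].
    exfalso. apply Hn. exists (y - a).
    replace (a + (y - a)) with y by ring. replace (b + (y - a)) with (y + (b - a)) by ring.
    auto.
  - destruct (Hp (y - (b - a))) as [H|H]; [|exact H].
    exfalso. apply Hn. exists (y - b).
    replace (b + (y - b)) with y by ring. replace (a + (y - b)) with (y - (b - a)) by ring.
    auto.
Qed.

Lemma noshift (A0 A1 : R -> Prop) (s : R) : partition2 A0 A1 -> two_S_covering A0 A1 ->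
  s <> 0 -> (forall x, A0 x -> A0 (x + s)) -> (forall x, A1 x -> A1 (x + s)) -> False.
Proof.
  intros [Hd [Hc _]] Hs Hs0 H0 H1.
  destruct (Hs 0 s) as [t [_ [E _]]]. { intro; apply Hs0; lra. }
  replace (0 + t) with t in E by ring. replace (s + t) with (t + s) in E by ring.
  destruct E as [[E1 E2]|[E1 E2]].
  - apply E2, H0, E1.
  - destruct (Hc t) as [H|H]; [contradiction|].
    apply (Hd (t + s)); split; [exact E2| apply H1, H].
Qed.

Theorem mainTheorem9 (A0 A1 : R -> Prop) :
  partition2 A0 A1 -> two_S_covering A0 A1 ->
  two_covering A0 \/ two_covering A1.
Proof.
  intros HP HS.
  destruct (classic (two_covering A0)) as [?|N0]; [left; auto|].
  destruct (classic (two_covering A1)) as [?|N1]; [right; auto|].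
  exfalso. pose proof HP as [Hd [Hc _]].
  destruct (nocov A0 A1 Hc N0) as [d0 [Hd0 K0]].
  destruct (nocov A1 A0 (fun x => proj1 (or_comm (A0 x) (A1 x)) (Hc x)) N1) as [d1 [Hd1 K1]].
  destruct (Req_dec (d0 + d1) 0) as [E|E].
  - apply (noshift A0 A1 (2 * d0) HP HS); [lra| |].
    + intros x Hx. destruct (K0 x Hx) as [H _].
      destruct (K1 _ H) as [_ H2].
      replace (x + 2 * d0) with (x + d0 - d1) by lra. exact H2.
    + intros x Hx. destruct (K1 x Hx) as [_ H].
      destruct (K0 _ H) as [H2 _].
      replace (x + 2 * d0) with (x - d1 + d0) by lra. exact H2.
  - apply (noshift A0 A1 (d0 + d1) HP HS); [lra| |].
    + intros x Hx. destruct (K0 x Hx) as [H _].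
      destruct (K1 _ H) as [H2 _].
      replace (x + (d0 + d1)) with (x + d0 + d1) by lra. exact H2.
    + intros x Hx. destruct (K1 x Hx) as [H _].
      destruct (K0 _ H) as [H2 _].
      replace (x + (d0 + d1)) with (x + d1 + d0) by lra. exact H2.
Qed.
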